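(* Let $u$ be a recurrent aperiodic infinite word over $\{0,\ldots,q-1\}$. The valid permutation $\alpha_u$ is ergodic if and only if for every factor $w$ of $u$ the uniform frequency $\rho_w(u)$ exists and $\rho_w(u)\neq 0$.
   Context: For an aperiodic infinite word $u$ over $\{0,\ldots,q-1\}$ with shifts $T^n u=u[n]u[n+1]\cdots$, the valid permutation $\alpha_u$ is the infinite permutation represented by the sequence $(0.T^n u)_{n\ge0}$ of real numbers written in base $q$; equivalently $\alpha_u[i]<\alpha_u[j]$ iff $T^i u$ is lexicographically smaller than $T^j u$. An infinite permutation is an equivalence class of real sequences with pairwise distinct elements, two sequences $(a[n]),(b[n])$ being equivalent iff $a[i]<a[j]\Leftrightarrow b[i]<b[j]$ for all $i,j$. A real sequence $(a[i])_{i\ge 0}$ is canonical if its elements are pairwise distinct, lie in $[0,1]$, and for every $t\in[0,1]$ the ratio $\#\{0\le k<n: a[j+k]<t\}/n\to t$ as $n\to\infty$ uniformly in $j$; a permutation is ergodic if it has a canonical representative. For a factor $w$ of $u$, the uniform frequency $\rho_w(u)$ exists if $|u[i..i+n]|_w/(n+1)$ converges to $\rho_w(u)$ as $n\to\infty$ uniformly in $i$, where $|x|_w$ is the number of occurrences of $w$ in $x$. *)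

(* Defs.v *)
From Stdlib Require Import Reals Lra Lia List Arith.
Import ListNotations.
Open Scope R_scope.

Definition word := nat -> nat.

Definition over_alphabet (q : nat) (u : word) : Prop := forall n, (u n < q)%nat.

Definition aperiodic (u : word) : Prop :=
  ~ (exists p N : nat, (0 < p)%nat /\ forall n, (N <= n)%nat -> u (n + p)%nat = u n).

Definition occurs_at (u : word) (w : list nat) (p : nat) : Prop :=
  map (fun k => u (p + k)%nat) (seq 0 (length w)) = w.

Definition occurs_atb (u : word) (w : list nat) (p : nat) : bool :=
  if list_eq_dec Nat.eq_dec (map (fun k => u (p + k)%nat) (seq 0 (length w))) w
  then true else false.

Definition is_factor (u : word) (w : list nat) : Prop := exists p, occurs_at u w p.

Definition recurrent (u : word) : Prop :=
  forall w, is_factor u w -> forall m, exists p, (m <= p)%nat /\ occurs_at u w p.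

(* |u[i..i+n]|_w : occurrences of w inside the factor u[i] ... u[i+n] *)
Definition occ_count (u : word) (w : list nat) (i n : nat) : nat :=
  length (filter (fun p => andb (Nat.leb (p + length w) (i + n + 1)) (occurs_atb u w p))
                 (seq i (n + 1))).

Definition uniform_frequency (u : word) (w : list nat) (rho : R) : Prop :=
  forall eps, eps > 0 -> exists N : nat, forall n i : nat, (N <= n)%nat ->
    Rabs (INR (occ_count u w i n) / INR (n + 1) - rho) < eps.

(* the real number 0.T^n u written in base q: sum_k u[n+k] q^{-(k+1)} *)
Definition shift_value (q : nat) (u : word) (n : nat) (x : R) : Prop :=
  infinite_sum (fun k => INR (u (n + k)%nat) / (INR q ^ (k + 1))) x.

(* a real sequence a represents the valid permutation alpha_u, i.e. a is
   order-equivalent to the sequence (0.T^n u)_n *)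
Definition represents_valid_perm (q : nat) (u : word) (a : nat -> R) : Prop :=
  exists v : nat -> R, (forall n, shift_value q u n (v n)) /\
    forall i j, a i < a j <-> v i < v j.

Fixpoint count_below (a : nat -> R) (j : nat) (t : R) (n : nat) : nat :=
  match n with
  | O => O
  | S m => (count_below a j t m + (if Rlt_dec (a (j + m)%nat) t then 1 else 0))%nat
  end.

Definition canonical (a : nat -> R) : Prop :=
  (forall i j, i <> j -> a i <> a j) /\
  (forall i, 0 <= a i <= 1) /\
  (forall t, 0 <= t <= 1 ->
     forall eps, eps > 0 -> exists N : nat, forall n j : nat, (N <= n)%nat -> (0 < n)%nat ->
       Rabs (INR (count_below a j t n) / INR n - t) < eps).

Definition valid_perm_ergodic (q : nat) (u : word) : Prop :=
  exists a, represents_valid_perm q u a /\ canonical a.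

(* Main.v *)
Require Import Defs.
From Stdlib Require Import Reals Lra Lia List Arith Classical ClassicalEpsilon.
Import ListNotations.
Open Scope R_scope.

Definition ind (b : bool) : nat := if b then 1%nat else 0%nat.

Fixpoint cnt (P : nat -> bool) (j N : nat) : nat :=
  match N with
  | O => O
  | S M => (cnt P j M + ind (P (j + M)%nat))%nat
  end.

Lemma ind_le1 b : (ind b <= 1)%nat.
Proof. destruct b; simpl; lia. Qed.

Lemma cnt_le P j N : (cnt P j N <= N)%nat.
Proof. induction N; simpl; auto. pose proof (ind_le1 (P (j+N)%nat)); lia. Qed.

Lemma cnt_split P j A B : cnt P j (A + B) = (cnt P j A + cnt P (j + A) B)%nat.
Proof.
  induction B. simpl. rewrite Nat.add_0_r. lia.
  rewrite Nat.add_succ_r. simpl. rewrite IHB. replace (j + (A + B))%nat with (j + A + B)%nat by lia. lia.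
Qed.

Lemma cnt_mono (P Q : nat -> bool) j N :
  (forall n, P n = true -> Q n = true) -> (cnt P j N <= cnt Q j N)%nat.
Proof.
  intros H; induction N; simpl; auto.
  destruct (P (j+N)%nat) eqn:E. rewrite (H _ E). simpl; lia.
  simpl. pose proof (ind_le1 (Q (j+N)%nat)); lia.
Qed.

Lemma cnt_ext (P Q : nat -> bool) j N :
  (forall n, P n = Q n) -> cnt P j N = cnt Q j N.
Proof. intros H; induction N; simpl; auto. rewrite IHN, H; auto. Qed.

Lemma cnt_ineq (P1 P2 Q1 Q2 : nat -> bool) j N :
  (forall n, (ind (P1 n) + ind (P2 n) <= ind (Q1 n) + ind (Q2 n))%nat) ->
  (cnt P1 j N + cnt P2 j N <= cnt Q1 j N + cnt Q2 j N)%nat.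
Proof.
  intros H; induction N; simpl; auto. specialize (H (j+N)%nat). lia.
Qed.

Lemma cnt_ineq3 (P1 P2 Q1 Q2 Q3 : nat -> bool) j N :
  (forall n, (ind (P1 n) + ind (P2 n) <= ind (Q1 n) + ind (Q2 n) + ind (Q3 n))%nat) ->
  (cnt P1 j N + cnt P2 j N <= cnt Q1 j N + cnt Q2 j N + cnt Q3 j N)%nat.
Proof.
  intros H; induction N; simpl; auto. specialize (H (j+N)%nat). lia.
Qed.

Lemma cnt_false (P : nat -> bool) j N :
  (forall k, (k < N)%nat -> P (j + k)%nat = false) -> cnt P j N = 0%nat.
Proof.
  induction N; intros H; simpl; auto. rewrite IHN by (intros; apply H; lia).
  rewrite H by lia. reflexivity.
Qed.

Lemma cnt_pos_exists (P : nat -> bool) j N :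
  (0 < cnt P j N)%nat -> exists k, (k < N)%nat /\ P (j + k)%nat = true.
Proof.
  intros H. destruct (classic (exists k, (k < N)%nat /\ P (j + k)%nat = true)); auto.
  rewrite cnt_false in H. lia. intros k Hk. destruct (P (j+k)%nat) eqn:E; auto.
  exfalso; apply H0; eauto.
Qed.

Lemma cnt_unique (P : nat -> bool) j N :
  (forall n m, P n = true -> P m = true -> n = m) -> (cnt P j N <= 1)%nat.
Proof.
  intros H. induction N; simpl. lia.
  destruct (P (j+N)%nat) eqn:E; simpl; [|lia].
  assert (cnt P j N = 0%nat); [|lia].
  apply cnt_false. intros k Hk. destruct (P (j+k)%nat) eqn:E2; auto.
  specialize (H _ _ E E2). lia.
Qed.

Lemma cnt_filter (P : nat -> bool) j N : length (filter P (seq j N)) = cnt P j N.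
Proof.
  induction N. simpl; auto. rewrite seq_S, filter_app, length_app, IHN. simpl.
  destruct (P (j+N)%nat); simpl; lia.
Qed.

Lemma count_below_cnt a j t n :
  count_below a j t n = cnt (fun x => if Rlt_dec (a x) t then true else false) j n.
Proof. induction n; simpl; auto. rewrite IHn. destruct (Rlt_dec (a (j+n)%nat) t); simpl; lia. Qed.

Lemma Rabs_lt_between x y e : Rabs (x - y) < e -> y - e < x < y + e.
Proof. intros H; apply Rabs_def2 in H; lra. Qed.

Definition conv (f : nat -> nat -> nat) (r : R) : Prop :=
  forall eps, eps > 0 -> exists N : nat, forall n j : nat, (N <= n)%nat -> (0 < n)%nat ->
    Rabs (INR (f j n) / INR n - r) < eps.

Lemma INR_pos n : (0 < n)%nat -> 0 < INR n.
Proof. intros; apply lt_0_INR; auto. Qed.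

Lemma conv_bdiff (f g : nat -> nat -> nat) (K : nat) r :
  (forall j n, (f j n <= g j n + K)%nat /\ (g j n <= f j n + K)%nat) ->
  conv f r -> conv g r.
Proof.
  intros Hd Hf eps Heps.
  destruct (Hf (eps/2)) as [N1 HN1]. lra.
  destruct (INR_unbounded (2 * INR K / eps)) as [N2 HN2].
  exists (Nat.max N1 (S N2)). intros n j Hn Hn0.
  specialize (HN1 n j ltac:(lia) Hn0).
  assert (Hnp: 0 < INR n) by (apply INR_pos; auto).
  assert (Hdiff : Rabs (INR (g j n) - INR (f j n)) <= INR K).
  { destruct (Hd j n) as [H1 H2]. apply le_INR in H1. apply le_INR in H2.
    rewrite plus_INR in H1, H2. apply Rabs_le. lra. }
  assert (HK : INR K / INR n < eps / 2).
  { assert (INR N2 < INR n) by (apply lt_INR; lia).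
    apply Rmult_lt_reg_r with (INR n); auto. unfold Rdiv. rewrite Rmult_assoc, Rinv_l by lra.
    assert (2 * INR K / eps * eps = 2 * INR K) by (field; lra).
    assert (2 * INR K / eps * eps < INR n * eps) by (apply Rmult_lt_compat_r; lra). nra. }
  replace (INR (g j n) / INR n - r) with ((INR (f j n) / INR n - r) + (INR (g j n) - INR (f j n)) / INR n) by (field; lra).
  eapply Rle_lt_trans. apply Rabs_triang.
  unfold Rdiv at 2. rewrite Rabs_mult, Rabs_inv, (Rabs_right (INR n)) by lra.
  assert (Rabs (INR (g j n) - INR (f j n)) * / INR n <= INR K / INR n).
  { unfold Rdiv. apply Rmult_le_compat_r; auto. left; apply Rinv_0_lt_compat; lra. }
  lra.
Qed.

Lemma conv_le_lin (f : nat -> nat -> nat) r c K :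
  conv f r -> (forall n, (0 < n)%nat -> INR (f 0%nat n) <= c * INR n + INR K) -> r <= c.
Proof.
  intros Hf Hb. destruct (Rle_or_lt r c) as [|Hlt]; auto. exfalso.
  destruct (Hf ((r - c)/2)) as [N1 HN1]. lra.
  destruct (INR_unbounded (2 * INR K / (r - c))) as [N2 HN2].
  set (n := Nat.max N1 (S N2)).
  assert (Hn0 : (0 < n)%nat) by lia.
  specialize (HN1 n 0%nat ltac:(lia) Hn0). specialize (Hb n Hn0).
  assert (Hnp: 0 < INR n) by (apply INR_pos; auto).
  assert (INR N2 < INR n) by (apply lt_INR; lia).
  apply Rabs_lt_between in HN1. destruct HN1 as [H1 _].
  assert (INR (f 0%nat n) > (r - (r - c)/2) * INR n).
  { apply Rmult_lt_reg_r with (/ INR n). apply Rinv_0_lt_compat; lra.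
    rewrite Rmult_assoc, Rinv_r by lra. unfold Rdiv in H1. lra. }
  assert (2 * INR K / (r - c) * (r - c) = 2 * INR K) by (field; lra).
  assert (2 * INR K / (r - c) * (r-c) < INR n * (r-c)) by (apply Rmult_lt_compat_r; lra).
  nra.
Qed.

Lemma conv_ge_lin (f : nat -> nat -> nat) r c K :
  conv f r -> (forall n, (0 < n)%nat -> c * INR n <= INR (f 0%nat n) + INR K) -> c <= r.
Proof.
  intros Hf Hb. destruct (Rle_or_lt c r) as [|Hlt]; auto. exfalso.
  destruct (Hf ((c - r)/2)) as [N1 HN1]. lra.
  destruct (INR_unbounded (2 * INR K / (c - r))) as [N2 HN2].
  set (n := Nat.max N1 (S N2)).
  assert (Hn0 : (0 < n)%nat) by lia.
  specialize (HN1 n 0%nat ltac:(lia) Hn0). specialize (Hb n Hn0).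
  assert (Hnp: 0 < INR n) by (apply INR_pos; auto).
  assert (INR N2 < INR n) by (apply lt_INR; lia).
  apply Rabs_lt_between in HN1. destruct HN1 as [_ H1].
  assert (INR (f 0%nat n) < (r + (c - r)/2) * INR n).
  { apply Rmult_lt_reg_r with (/ INR n). apply Rinv_0_lt_compat; lra.
    rewrite Rmult_assoc, Rinv_r by lra. unfold Rdiv in H1. lra. }
  assert (2 * INR K / (c - r) * (c - r) = 2 * INR K) by (field; lra).
  assert (2 * INR K / (c - r) * (c-r) < INR n * (c-r)) by (apply Rmult_lt_compat_r; lra).
  nra.
Qed.

Lemma conv_mono (f g : nat -> nat -> nat) r1 r2 :
  conv f r1 -> conv g r2 -> (forall j n, (f j n <= g j n)%nat) -> r1 <= r2.
Proof.
  intros Hf Hg H. destruct (Rle_or_lt r1 r2) as [|Hlt]; auto. exfalso.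
  destruct (Hf ((r1 - r2)/2)) as [N1 HN1]. lra.
  destruct (Hg ((r1 - r2)/2)) as [N2 HN2]. lra.
  set (n := Nat.max (S N1) N2).
  specialize (HN1 n 0%nat ltac:(lia) ltac:(lia)). specialize (HN2 n 0%nat ltac:(lia) ltac:(lia)).
  specialize (H 0%nat n). apply le_INR in H.
  assert (Hnp: 0 < INR n) by (apply INR_pos; lia).
  assert (INR (f 0%nat n) / INR n <= INR (g 0%nat n) / INR n).
  { unfold Rdiv. apply Rmult_le_compat_r; auto. left; apply Rinv_0_lt_compat; lra. }
  apply Rabs_lt_between in HN1. apply Rabs_lt_between in HN2. lra.
Qed.

Lemma conv_add (f g h : nat -> nat -> nat) r1 r2 :
  conv f r1 -> conv g r2 -> (forall j n, h j n = (f j n + g j n)%nat) -> conv h (r1 + r2).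
Proof.
  intros Hf Hg H eps Heps.
  destruct (Hf (eps/2)) as [N1 HN1]. lra.
  destruct (Hg (eps/2)) as [N2 HN2]. lra.
  exists (Nat.max N1 N2). intros n j Hn Hn0.
  specialize (HN1 n j ltac:(lia) Hn0). specialize (HN2 n j ltac:(lia) Hn0).
  rewrite H, plus_INR.
  assert (Hnp: 0 < INR n) by (apply INR_pos; lia).
  replace ((INR (f j n) + INR (g j n)) / INR n - (r1 + r2)) with
    ((INR (f j n) / INR n - r1) + (INR (g j n) / INR n - r2)) by (field; lra).
  eapply Rle_lt_trans. apply Rabs_triang. lra.
Qed.

Lemma conv_nonneg f r : conv f r -> 0 <= r.
Proof.
  intros Hf. apply (conv_ge_lin f r 0 0 Hf). intros. rewrite Rmult_0_l. simpl. 
  rewrite Rplus_0_r. apply pos_INR.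
Qed.

Definition UF (P : nat -> bool) (r : R) := conv (fun j n => cnt P j n) r.

Lemma UF_le1 P r : UF P r -> r <= 1.
Proof.
  intros H. apply (conv_le_lin _ r 1 0 H). intros n _. simpl. rewrite Rplus_0_r, Rmult_1_l.
  apply le_INR, cnt_le.
Qed.

Lemma occurs_atb_spec u w p : occurs_atb u w p = true <-> occurs_at u w p.
Proof.
  unfold occurs_atb, occurs_at. destruct (list_eq_dec Nat.eq_dec _ _); split; intros; auto; congruence.
Qed.

Lemma cnt_tail_bound (i M K : nat) :
  (cnt (fun p => Nat.ltb (i + M) (p + K)) i M <= K)%nat.
Proof.
  destruct (le_lt_dec M K). pose proof (cnt_le (fun p => Nat.ltb (i + M) (p + K)) i M); lia.
  set (P := fun p => Nat.ltb (i + M) (p + K)).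
  assert (E : cnt P i M = cnt P i ((M - K) + K)) by (f_equal; lia).
  rewrite E, cnt_split.
  rewrite cnt_false. pose proof (cnt_le P (i + (M-K)) K); lia.
  intros k Hk. unfold P. apply Nat.ltb_ge. lia.
Qed.

Lemma occ_count_bounds u w i n :
  (occ_count u w i n <= cnt (occurs_atb u w) i (n+1))%nat /\
  (cnt (occurs_atb u w) i (n+1) <= occ_count u w i n + length w)%nat.
Proof.
  unfold occ_count. rewrite cnt_filter. split.
  - apply cnt_mono. intros p H. apply andb_prop in H; tauto.
  - pose proof (cnt_ineq (occurs_atb u w) (fun _ => false)
      (fun p => (Nat.leb (p + length w) (i + n + 1) && occurs_atb u w p)%bool)
      (fun p => Nat.ltb (i + (n+1)) (p + length w)) i (n+1)) as H.
    assert (H0 : cnt (fun _ => false) i (n+1) = 0%nat) by (apply cnt_false; auto).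
    pose proof (cnt_tail_bound i (n+1) (length w)).
    rewrite H0 in H. 
    assert (forall m, (ind (occurs_atb u w m) + ind false <=
      ind ((Nat.leb (m + length w) (i + n + 1) && occurs_atb u w m)%bool) +
      ind (Nat.ltb (i + (n + 1)) (m + length w)))%nat).
    { intros m. destruct (occurs_atb u w m); simpl; [|lia].
      destruct (Nat.leb (m + length w) (i + n + 1)) eqn:E; simpl. lia.
      apply Nat.leb_gt in E. replace (Nat.ltb (i + (n + 1)) (m + length w)) with true; simpl. lia.
      symmetry; apply Nat.ltb_lt; lia. }
    specialize (H H2). lia.
Qed.

Definition occf u w (j n : nat) : nat :=
  match n with O => O | S m => occ_count u w j m end.

Lemma uf_occf u w r : uniform_frequency u w r <-> conv (occf u w) r.
Proof.
  split.
  - intros H eps Heps. destruct (H eps Heps) as [N HN]. exists (S N). intros n j Hn Hn0.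
    destruct n as [|m]. lia. change (occf u w j (S m)) with (occ_count u w j m).
    specialize (HN m j ltac:(lia)).
    rewrite Nat.add_1_r in HN. exact HN.
  - intros H eps Heps. destruct (H eps Heps) as [N HN]. exists N. intros n i Hn.
    specialize (HN (S n) i ltac:(lia) ltac:(lia)). change (occf u w i (S n)) with (occ_count u w i n) in HN.
    rewrite Nat.add_1_r. exact HN.
Qed.

Lemma uf_UF u w r : uniform_frequency u w r <-> UF (occurs_atb u w) r.
Proof.
  rewrite uf_occf. unfold UF. split; apply conv_bdiff with (K := length w);
  intros j n; destruct n as [|m]; simpl; try lia;
  destruct (occ_count_bounds u w j m) as [H1 H2]; rewrite Nat.add_1_r in H1, H2; simpl in *; lia.
Qed.

Lemma min_exists (P : nat -> Prop) :
  (exists n, P n) -> exists n, P n /\ forall k, (k < n)%nat -> ~ P k.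
Proof.
  intros [n Hn]. revert Hn. induction n as [n IH] using (well_founded_induction lt_wf).
  intros Hn. destruct (classic (exists k, (k < n)%nat /\ P k)) as [[k [Hk1 Hk2]]|H].
  - apply (IH k Hk1 Hk2).
  - exists n. split; auto. intros k Hk HP. apply H; eauto.
Qed.

Definition lexlt (u : word) (i j : nat) : Prop :=
  exists m, (forall k, (k < m)%nat -> u (i + k)%nat = u (j + k)%nat) /\ (u (i + m) < u (j + m))%nat.

Section Lex.
Variable q : nat.
Variable u : word.
Hypothesis Hq : over_alphabet q u.
Hypothesis Hap : aperiodic u.

Lemma shifts_differ i j : i <> j -> exists m, u (i + m)%nat <> u (j + m)%nat.
Proof.
  intros Hij. apply NNPP. intros H.
  assert (Heq : forall m, u (i + m)%nat = u (j + m)%nat).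
  { intros m. apply NNPP. intros H'. apply H; eauto. }
  apply Hap. destruct (lt_dec i j).
  - exists (j - i)%nat, i. split. lia. intros x Hn.
    specialize (Heq (x - i)%nat). replace (i + (x - i))%nat with x in Heq by lia.
    replace (j + (x - i))%nat with (x + (j - i))%nat in Heq by lia. auto.
  - exists (i - j)%nat, j. split. lia. intros x Hn.
    specialize (Heq (x - j)%nat). replace (j + (x - j))%nat with x in Heq by lia.
    replace (i + (x - j))%nat with (x + (i - j))%nat in Heq by lia. auto.
Qed.

Lemma lex_total i j : i <> j -> lexlt u i j \/ lexlt u j i.
Proof.
  intros Hij. destruct (min_exists (fun m => u (i + m)%nat <> u (j + m)%nat) (shifts_differ i j Hij))
    as [m [Hm Hmin]].
  assert (Hagree : forall k, (k < m)%nat -> u (i + k)%nat = u (j + k)%nat).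
  { intros k Hk. apply NNPP. apply Hmin; auto. }
  destruct (lt_dec (u (i+m)%nat) (u (j+m)%nat)).
  - left. exists m. auto.
  - right. exists m. split. intros; symmetry; auto. lia.
Qed.

End Lex.

Lemma lex_irrefl u i : ~ lexlt u i i.
Proof. intros [m [_ H]]. lia. Qed.

Lemma lex_asym u i j : lexlt u i j -> lexlt u j i -> False.
Proof.
  intros [m1 [A1 B1]] [m2 [A2 B2]].
  destruct (lt_eq_lt_dec m1 m2) as [[H|H]|H].
  - specialize (A2 m1 H). lia.
  - subst. lia.
  - specialize (A1 m2 H). lia.
Qed.

Lemma lex_trans u i j k : lexlt u i j -> lexlt u j k -> lexlt u i k.
Proof.
  intros [m1 [A1 B1]] [m2 [A2 B2]].
  destruct (lt_eq_lt_dec m1 m2) as [[H|H]|H].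
  - exists m1. split. intros x Hx. rewrite A1 by lia. apply A2; lia. rewrite <- (A2 m1 H). auto.
  - subst. exists m2. split. intros x Hx. rewrite A1 by lia. apply A2; lia. lia.
  - exists m2. split. intros x Hx. rewrite A1 by lia. apply A2; lia. rewrite (A1 m2 H). auto.
Qed.

Lemma lim_ge U l c N0 : Un_cv U l -> (forall n, (N0 <= n)%nat -> c <= U n) -> c <= l.
Proof.
  intros H Hb. destruct (Rle_or_lt c l) as [|Hlt]; auto. exfalso.
  destruct (H (c - l)) as [N HN]. lra.
  specialize (HN (Nat.max N N0) ltac:(lia)). specialize (Hb (Nat.max N N0) ltac:(lia)).
  unfold Rdist in HN. apply Rabs_def2 in HN. lra.
Qed.

Section Shift.
Variable q : nat.
Variable u : word.
Hypothesis Hq : over_alphabet q u.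
Hypothesis Hap : aperiodic u.

Lemma q_ge2 : (2 <= q)%nat.
Proof.
  pose proof (Hq 0%nat). destruct (le_lt_dec 2 q); auto. exfalso.
  apply Hap. exists 1%nat, 0%nat. split. lia. intros n _.
  pose proof (Hq n). pose proof (Hq (n+1)%nat). lia.
Qed.

Lemma not_ev_const i m c : exists k, (m < k)%nat /\ u (i + k)%nat <> c.
Proof.
  apply NNPP. intros H. apply Hap. exists 1%nat, (i + m + 1)%nat. split. lia.
  intros n Hn.
  assert (A : u (i + (n - i))%nat = c). { apply NNPP. intros H'. apply H. exists (n - i)%nat. split; [lia|auto]. }
  assert (B : u (i + (n + 1 - i))%nat = c). { apply NNPP. intros H'. apply H. exists (n + 1 - i)%nat. split; [lia|auto]. }
  replace (i + (n - i))%nat with n in A by lia. replace (i + (n + 1 - i))%nat with (n + 1)%nat in B by lia.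
  congruence.
Qed.

Let Q := INR q.
Lemma Q_ge2 : 2 <= Q.
Proof. unfold Q. replace 2 with (INR 2) by (simpl; lra). apply le_INR, q_ge2. Qed.

Lemma Qpow_pos k : 0 < Q ^ k.
Proof. apply pow_lt. pose proof Q_ge2; lra. Qed.

Definition tn (n k : nat) : R := INR (u (n + k)%nat) / INR q ^ (k + 1).

Lemma u_le n : INR (u n) <= Q - 1.
Proof.
  unfold Q. pose proof (Hq n). assert (u n + 1 <= q)%nat by lia. apply le_INR in H0.
  rewrite plus_INR in H0. simpl in H0. lra.
Qed.

Lemma tn_nonneg n k : 0 <= tn n k.
Proof. unfold tn. apply Rmult_le_pos. apply pos_INR. left; apply Rinv_0_lt_compat, Qpow_pos. Qed.

Lemma S_bound n N : sum_f_R0 (tn n) N <= 1 - 1 / Q ^ (N + 1).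
Proof.
  pose proof Q_ge2 as HQ.
  induction N.
  - simpl. unfold tn. simpl. pose proof (u_le (n+0)%nat).
    rewrite Rmult_1_r. unfold Rdiv. fold Q.
    assert (INR (u (n+0)%nat) * / Q <= (Q - 1) * / Q). 
    { apply Rmult_le_compat_r; auto. left; apply Rinv_0_lt_compat; lra. }
    replace ((Q - 1) * / Q) with (1 - 1 * / Q) in H0 by (field; lra). replace (Q * 1) with Q by ring. lra.
  - simpl sum_f_R0. unfold tn at 2. fold Q.
    replace (S N + 1)%nat with (S (N + 1)) by lia. simpl (Q ^ S (N+1)).
    pose proof (Qpow_pos (N+1)) as HX. set (X := Q ^ (N + 1)) in *.
    pose proof (u_le (n + S N)%nat).
    assert (INR (u (n + S N)%nat) / (Q * X) <= (Q - 1) / (Q * X)).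
    { unfold Rdiv. apply Rmult_le_compat_r; auto. left; apply Rinv_0_lt_compat. nra. }
    replace ((Q - 1) / (Q * X)) with (1 / X - 1 / (Q * X)) in H0 by (field; lra). lra.
Qed.

Lemma shift_value_exists n : exists x, shift_value q u n x.
Proof.
  assert (G : Un_growing (fun N => sum_f_R0 (tn n) N)).
  { intros N. simpl. pose proof (tn_nonneg n (S N)). lra. }
  assert (B : has_ub (fun N => sum_f_R0 (tn n) N)).
  { exists 1. intros x [N ->]. pose proof (S_bound n N). pose proof (Qpow_pos (N+1)).
    assert (0 < 1 / Q ^ (N+1)) by (apply Rdiv_lt_0_compat; lra). lra. }
  destruct (growing_cv _ G B) as [l Hl]. exists l. exact Hl.
Qed.

Lemma shift_value_lt i j x y :
  shift_value q u i x -> shift_value q u j y -> lexlt u i j -> x < y.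
Proof.
  intros Hx Hy [m [Hagree Hlt]].
  pose proof Q_ge2 as HQ.
  destruct (not_ev_const i m (q - 1)%nat) as [k0 [Hk0 Hk0']].
  set (c := fun k => INR (u (j + k)%nat) - INR (u (i + k)%nat)).
  set (D := fun N => sum_f_R0 (fun k => c k / Q ^ (k + 1)) N).
  assert (HD : forall N, D N = sum_f_R0 (tn j) N - sum_f_R0 (tn i) N).
  { intros N. unfold D. rewrite <- minus_sum. apply sum_eq. intros k _. unfold c, tn. fold Q. field.
    pose proof (Qpow_pos (k+1)); lra. }
  assert (Hcv : Un_cv D (y - x)).
  { assert (Un_cv (fun N => sum_f_R0 (tn j) N - sum_f_R0 (tn i) N) (y - x)) by (apply CV_minus; auto).
    intros e He. destruct (H e He) as [N HN]. exists N. intros n Hn. rewrite HD. auto. }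
  assert (c0 : forall k, (k < m)%nat -> c k = 0).
  { intros k Hk. unfold c. rewrite Hagree by auto. ring. }
  assert (cm : 1 <= c m).
  { unfold c. assert (u (i+m) + 1 <= u (j+m))%nat by lia. apply le_INR in H. rewrite plus_INR in H. simpl in H. lra. }
  assert (cge : forall k, -(Q - 1) <= c k).
  { intros k. unfold c. pose proof (u_le (i+k)%nat). pose proof (pos_INR (u (j+k)%nat)). lra. }
  assert (ck0 : -(Q - 2) <= c k0).
  { unfold c. pose proof (Hq (i + k0)%nat). assert (u (i+k0) + 2 <= q)%nat by lia.
    apply le_INR in H0. rewrite plus_INR in H0. simpl in H0. fold Q in H0.
    pose proof (pos_INR (u (j+k0)%nat)). lra. }
  assert (Hind : forall N, ((N < m)%nat -> D N = 0) /\
     ((m <= N)%nat -> 1 / Q ^ (N+1) + (if le_dec k0 N then 1 / Q ^ (k0 + 1) else 0) <= D N)).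
  { induction N.
    - unfold D; simpl sum_f_R0. split.
      + intros H. rewrite c0 by lia. unfold Rdiv; ring.
      + intros H. assert (m = 0%nat) by lia. subst m. destruct (le_dec k0 0). lia.
        rewrite Rplus_0_r. unfold Rdiv. apply Rmult_le_compat_r. left; apply Rinv_0_lt_compat; lra. auto.
    - destruct IHN as [IH1 IH2].
      assert (HDS : D (S N) = D N + c (S N) / Q ^ (S N + 1)) by (unfold D; simpl; auto).
      replace (S N + 1)%nat with (S (N + 1)) in * by lia.
      pose proof (Qpow_pos (N+1)) as HX. simpl (Q ^ S (N+1)) in *. set (X := Q ^ (N + 1)) in *.
      split.
      + intros H. rewrite HDS, IH1, c0 by lia. unfold Rdiv; ring.
      + intros H. rewrite HDS.
        destruct (Nat.eq_dec (S N) m) as [E|E].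
        * rewrite IH1 by lia. subst m. destruct (le_dec k0 (S N)). lia. rewrite Rplus_0_r, Rplus_0_l.
          unfold Rdiv. apply Rmult_le_compat_r. left; apply Rinv_0_lt_compat; nra. auto.
        * specialize (IH2 ltac:(lia)).
          destruct (Nat.eq_dec k0 (S N)) as [E2|E2].
          -- destruct (le_dec k0 N). lia. destruct (le_dec k0 (S N)); [|lia].
             rewrite Rplus_0_r in IH2. subst k0. replace (S N + 1)%nat with (S (N+1)) by lia.
             simpl (Q ^ S (N+1)). fold X.
             assert (-(Q-2) / (Q * X) <= c (S N) / (Q * X)).
             { unfold Rdiv. apply Rmult_le_compat_r; auto. left; apply Rinv_0_lt_compat; nra. }
             replace (1 / X) with (1 / (Q * X) + 1 / (Q * X) + (Q - 2) / (Q * X)) in IH2 by (field; lra).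
             unfold Rdiv in *. lra.
          -- assert (Hs : (if le_dec k0 (S N) then 1 / Q ^ (k0+1) else 0) = (if le_dec k0 N then 1 / Q ^ (k0+1) else 0)).
             { destruct (le_dec k0 (S N)), (le_dec k0 N); auto; lia. }
             rewrite Hs.
             assert (-(Q-1) / (Q * X) <= c (S N) / (Q * X)).
             { unfold Rdiv. apply Rmult_le_compat_r; auto. left; apply Rinv_0_lt_compat; nra. }
             replace (1 / X) with (1 / (Q * X) + (Q - 1) / (Q * X)) in IH2 by (field; lra).
             unfold Rdiv in *. lra. }
  assert (1 / Q ^ (k0 + 1) <= y - x).
  { apply (lim_ge D (y - x) _ k0 Hcv). intros n Hn. destruct (Hind n) as [_ H2].
    specialize (H2 ltac:(lia)). destruct (le_dec k0 n); [|lia].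
    pose proof (Qpow_pos (n+1)). assert (0 < 1 / Q ^ (n+1)) by (apply Rdiv_lt_0_compat; lra). lra. }
  pose proof (Qpow_pos (k0+1)). assert (0 < 1 / Q ^ (k0+1)) by (apply Rdiv_lt_0_compat; lra). lra.
Qed.

End Shift.

Lemma conv_sub (f g h : nat -> nat -> nat) r1 r2 :
  conv f r1 -> conv g r2 -> (forall j n, f j n = (h j n + g j n)%nat) -> conv h (r1 - r2).
Proof.
  intros Hf Hg H eps Heps.
  destruct (Hf (eps/2)) as [N1 HN1]. lra.
  destruct (Hg (eps/2)) as [N2 HN2]. lra.
  exists (Nat.max N1 N2). intros n j Hn Hn0.
  specialize (HN1 n j ltac:(lia) Hn0). specialize (HN2 n j ltac:(lia) Hn0).
  rewrite H, plus_INR in HN1.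
  assert (Hnp: 0 < INR n) by (apply INR_pos; lia).
  replace (INR (h j n) / INR n - (r1 - r2)) with
    (((INR (h j n) + INR (g j n)) / INR n - r1) - (INR (g j n) / INR n - r2)) by (field; lra).
  eapply Rle_lt_trans. apply Rabs_triang. rewrite Rabs_Ropp. lra.
Qed.

Lemma nth_map_seq (f : nat -> nat) L k d : (k < L)%nat -> nth k (map f (seq 0 L)) d = f k.
Proof.
  intros Hk. rewrite nth_indep with (d' := f 0%nat) by (rewrite length_map, length_seq; auto).
  rewrite map_nth, seq_nth by auto. reflexivity.
Qed.

Lemma occurs_at_nth u w p : occurs_at u w p <-> forall k, (k < length w)%nat -> u (p + k)%nat = nth k w 0%nat.
Proof.
  unfold occurs_at. split.
  - intros H k Hk. rewrite <- H. rewrite nth_map_seq; auto.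
  - intros H. apply nth_ext with (d := 0%nat) (d' := 0%nat). rewrite length_map, length_seq; auto.
    intros k Hk. rewrite length_map, length_seq in Hk.
    rewrite nth_map_seq; auto.
Qed.

Lemma occ_convex u w i j k :
  occurs_at u w i -> occurs_at u w k -> lexlt u i j -> lexlt u j k -> occurs_at u w j.
Proof.
  rewrite !occurs_at_nth. intros Hi Hk [m1 [A1 B1]] [m2 [A2 B2]] x Hx.
  assert (Hik : forall y, (y < length w)%nat -> u (i + y)%nat = u (k + y)%nat).
  { intros y Hy. rewrite Hi, Hk; auto. }
  rewrite <- Hi by auto.
  destruct (le_lt_dec (length w) m1). symmetry; apply A1; lia.
  destruct (le_lt_dec (length w) m2). rewrite A2 by lia. symmetry; apply Hik; auto.
  exfalso.
  destruct (lt_eq_lt_dec m1 m2) as [[H|H]|H].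
  - specialize (A2 m1 H). specialize (Hik m1 ltac:(lia)). lia.
  - subst. specialize (Hik m2 ltac:(lia)). lia.
  - specialize (A1 m2 H). specialize (Hik m2 ltac:(lia)). lia.
Qed.

Lemma rep_order q u a : over_alphabet q u -> aperiodic u -> represents_valid_perm q u a ->
  forall i j, a i < a j <-> lexlt u i j.
Proof.
  intros Hq Hap [v [Hv Hav]] i j. rewrite Hav. split.
  - intros H. destruct (Nat.eq_dec i j). subst; lra.
    destruct (lex_total u Hap i j n) as [|H2]; auto.
    pose proof (shift_value_lt q u Hq Hap j i _ _ (Hv j) (Hv i) H2). lra.
  - intros H. apply (shift_value_lt q u Hq Hap i j); auto.
Qed.

Definition bltR (x t : R) : bool := if Rlt_dec x t then true else false.
Definition beqR (x t : R) : bool := if Req_EM_T x t then true else false.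

Lemma forward q u : over_alphabet q u -> recurrent u -> aperiodic u ->
  valid_perm_ergodic q u ->
  forall w : list nat, is_factor u w -> exists rho : R, uniform_frequency u w rho /\ rho <> 0.
Proof.
  intros Hq Hrec Hap [a [Hrep [Hinj [Hbnd Hcv]]]] w Hw.
  pose proof (rep_order q u a Hq Hap Hrep) as Hord.
  destruct (Hrec w Hw 0%nat) as [p1 [_ Hp1]].
  destruct (Hrec w Hw (S p1)) as [p2 [Hp2a Hp2]].
  set (E := fun x => exists n, occurs_at u w n /\ x = a n).
  set (E' := fun x => exists n, occurs_at u w n /\ x = - a n).
  destruct (completeness E) as [t [Ht1 Ht2]].
  { exists 1. intros x [n [_ ->]]. apply Hbnd. }
  { exists (a p1). exists p1; auto. }
  destruct (completeness E') as [ms [Hs1 Hs2]].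
  { exists 0. intros x [n [_ ->]]. pose proof (Hbnd n). lra. }
  { exists (- a p1). exists p1; auto. }
  set (s := - ms).
  assert (HSin : forall n, occurs_at u w n -> s <= a n <= t).
  { intros n Hn. split. unfold s. assert (- a n <= ms) by (apply Hs1; exists n; auto). lra.
    apply Ht1. exists n; auto. }
  assert (Hbelow : forall n, s < a n -> exists n1, occurs_at u w n1 /\ a n1 < a n).
  { intros n Hn. apply NNPP. intros H. assert (ms <= - a n).
    { apply Hs2. intros x [n1 [Hn1 ->]]. destruct (Rle_or_lt (- a n1) (- a n)); auto.
      exfalso; apply H. exists n1; split; auto; lra. }
    unfold s in Hn; lra. }
  assert (Habove : forall n, a n < t -> exists n2, occurs_at u w n2 /\ a n < a n2).
  { intros n Hn. apply NNPP. intros H. assert (t <= a n).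
    { apply Ht2. intros x [n1 [Hn1 ->]]. destruct (Rle_or_lt (a n1) (a n)); auto.
      exfalso; apply H. exists n1; split; auto. }
    lra. }
  assert (Hmid : forall n, s < a n < t -> occurs_at u w n).
  { intros n [H1 H2]. destruct (Hbelow n H1) as [n1 [O1 L1]]. destruct (Habove n H2) as [n2 [O2 L2]].
    apply (occ_convex u w n1 n n2); auto; apply Hord; auto. }
  assert (Hst : s < t).
  { assert (a p1 <> a p2) by (apply Hinj; lia).
    pose proof (HSin p1 Hp1). pose proof (HSin p2 Hp2). 
    destruct (Rle_or_lt t s); [|auto]. exfalso. apply H. lra. }
  assert (Hs0 : 0 <= s) by (pose proof (HSin p1 Hp1); pose proof (Hbnd p1); unfold s in *; 
    assert (- a p1 <= ms) by (apply Hs1; exists p1; auto); pose proof (Hbnd p1);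
    destruct (Rle_or_lt 0 s); auto; exfalso;
    assert (ms <= 0) by (apply Hs2; intros x [n [_ ->]]; pose proof (Hbnd n); lra); unfold s in *; lra).
  assert (Ht1' : t <= 1) by (apply Ht2; intros x [n [_ ->]]; apply Hbnd).
  assert (Hconvt : conv (fun j n => cnt (fun x => bltR (a x) t) j n) t).
  { intros e He. destruct (Hcv t ltac:(lra) e He) as [N HN]. exists N. intros n j Hn Hn0.
    specialize (HN n j Hn Hn0). rewrite count_below_cnt in HN. exact HN. }
  assert (Hconvs : conv (fun j n => cnt (fun x => bltR (a x) s) j n) s).
  { intros e He. destruct (Hcv s ltac:(lra) e He) as [N HN]. exists N. intros n j Hn Hn0.
    specialize (HN n j Hn Hn0). rewrite count_below_cnt in HN. exact HN. }
  set (Pt := fun x => bltR (a x) t). set (Ps := fun x => bltR (a x) s).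
  set (PS := occurs_atb u w).
  assert (Huniq : forall z, forall j n, (cnt (fun x => beqR (a x) z) j n <= 1)%nat).
  { intros z j n. apply cnt_unique. intros x y Hx Hy. unfold beqR in *.
    destruct (Req_EM_T (a x) z); [|discriminate]. destruct (Req_EM_T (a y) z); [|discriminate].
    destruct (Nat.eq_dec x y); auto. exfalso. apply (Hinj x y n0). congruence. }
  assert (Hsub : forall j n, (cnt Ps j n <= cnt Pt j n)%nat).
  { intros j n. apply cnt_mono. unfold Ps, Pt, bltR. intros x. destruct (Rlt_dec (a x) s); [|discriminate].
    destruct (Rlt_dec (a x) t); auto. lra. }
  set (h := fun j n => (cnt Pt j n - cnt Ps j n)%nat).
  assert (Hh : conv h (t - s)).
  { apply (conv_sub (fun j n => cnt Pt j n) (fun j n => cnt Ps j n)); auto.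
    intros j n. unfold h. specialize (Hsub j n). lia. }
  assert (HPS : UF PS (t - s)).
  { unfold UF. apply (conv_bdiff h _ 1); auto. intros j n.
    pose proof (cnt_ineq PS Ps Pt (fun x => beqR (a x) t) j n) as I1.
    pose proof (cnt_ineq3 Pt (fun _ => false) PS Ps (fun x => beqR (a x) s) j n) as I2.
    rewrite (cnt_false (fun _ => false)) in I2 by auto.
    pose proof (Huniq t j n). pose proof (Huniq s j n). pose proof (Hsub j n).
    assert (C1 : forall x, (ind (PS x) + ind (Ps x) <= ind (Pt x) + ind (beqR (a x) t))%nat).
    { intros x. unfold PS, Ps, Pt, bltR, beqR.
      destruct (occurs_atb u w x) eqn:Eo.
      - apply occurs_atb_spec in Eo. pose proof (HSin x Eo).
        destruct (Rlt_dec (a x) s); [lra|]. destruct (Rlt_dec (a x) t); simpl; [lia|].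
        destruct (Req_EM_T (a x) t); simpl; [lia|lra].
      - destruct (Rlt_dec (a x) s); simpl; [|lia]. destruct (Rlt_dec (a x) t); simpl; [lia|lra]. }
    assert (C2 : forall x, (ind (Pt x) + ind false <= ind (PS x) + ind (Ps x) + ind (beqR (a x) s))%nat).
    { intros x. unfold PS, Ps, Pt, bltR, beqR.
      destruct (Rlt_dec (a x) t); simpl; [|lia].
      destruct (Rlt_dec (a x) s); simpl; [lia|].
      destruct (Req_EM_T (a x) s); simpl; [lia|].
      assert (occurs_at u w x) by (apply Hmid; lra). apply occurs_atb_spec in H2. rewrite H2. simpl. lia. }
    specialize (I1 C1). specialize (I2 C2). unfold h. split; lia. }
  exists (t - s). split. apply uf_UF. exact HPS. lra.
Qed.

Fixpoint words (q L : nat) : list (list nat) :=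
  match L with
  | O => [[]]
  | S L' => flat_map (fun a => map (cons a) (words q L')) (seq 0 q)
  end.

Lemma in_words q L w : In w (words q L) <-> length w = L /\ Forall (fun a => (a < q)%nat) w.
Proof.
  revert w. induction L; intros w; simpl.
  - split. intros [<-|[]]. split; auto. intros [H _]. destruct w; simpl in H; auto; lia.
  - rewrite in_flat_map. split.
    + intros [a [Ha Hw]]. apply in_map_iff in Hw. destruct Hw as [w' [<- Hw']].
      apply IHL in Hw'. destruct Hw' as [H1 H2]. apply in_seq in Ha. split; [simpl; lia|constructor; auto; lia].
    + intros [H1 H2]. destruct w as [|a w']. simpl in H1; lia.
      inversion H2; subst. exists a. split. apply in_seq; lia.
      apply in_map. apply IHL. simpl in H1. split; auto.
Qed.

Lemma NoDup_words q L : NoDup (words q L).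
Proof.
  induction L; simpl. constructor. simpl; auto. constructor.
  assert (G : forall l, NoDup l -> NoDup (flat_map (fun a => map (cons a) (words q L)) l)).
  { induction l; simpl; intros Hl. constructor. inversion Hl; subst.
    apply NoDup_app.
    - apply NoDup_map_NoDup_ForallPairs; auto. intros x y _ _ H. inversion H; auto.
    - apply IHl; auto.
    - intros x Hx Hx2. apply in_map_iff in Hx. destruct Hx as [w [<- _]].
      apply in_flat_map in Hx2. destruct Hx2 as [b [Hb Hb2]]. apply in_map_iff in Hb2.
      destruct Hb2 as [w' [E _]]. inversion E; subst. auto. }
  apply G, seq_NoDup.
Qed.

Definition pref (u : word) (k L : nat) : list nat := map (fun x => u (k + x)%nat) (seq 0 L).

Lemma length_pref u k L : length (pref u k L) = L.
Proof. unfold pref. rewrite length_map, length_seq. reflexivity. Qed.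

Lemma pref_in_words q u k L : over_alphabet q u -> In (pref u k L) (words q L).
Proof.
  intros Hq. apply in_words. split. apply length_pref.
  apply Forall_forall. intros x Hx. unfold pref in Hx. apply in_map_iff in Hx.
  destruct Hx as [y [<- _]]. apply Hq.
Qed.

Definition leqb (w1 w2 : list nat) : bool := if list_eq_dec Nat.eq_dec w1 w2 then true else false.

Lemma leqb_spec w1 w2 : leqb w1 w2 = true <-> w1 = w2.
Proof. unfold leqb. destruct (list_eq_dec Nat.eq_dec w1 w2); split; intros; auto; congruence. Qed.

Lemma occb_pref u w k : occurs_atb u w k = leqb (pref u k (length w)) w.
Proof. reflexivity. Qed.

Definition lsum (g : list nat -> R) (W : list (list nat)) : R := fold_right (fun w acc => g w + acc) 0 W.
Definition nsum (g : list nat -> nat) (W : list (list nat)) : nat := fold_right (fun w acc => (g w + acc)%nat) 0%nat W.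

Lemma nsum_ext g1 g2 W : (forall w, g1 w = g2 w) -> nsum g1 W = nsum g2 W.
Proof. intros H; induction W; simpl; [reflexivity|]. rewrite H, IHW; reflexivity. Qed.

Lemma nsum_add g1 g2 W : nsum (fun w => (g1 w + g2 w)%nat) W = (nsum g1 W + nsum g2 W)%nat.
Proof. induction W; simpl; auto. rewrite IHW; lia. Qed.

Lemma nsum_zero g W : (forall w, In w W -> g w = 0%nat) -> nsum g W = 0%nat.
Proof. induction W; simpl; intros H; auto. rewrite H, IHW; auto. Qed.

Lemma nsum_indicator (Q : list nat -> bool) W x : NoDup W -> In x W ->
  nsum (fun w => if Q w then ind (leqb x w) else 0%nat) W = ind (Q x).
Proof.
  induction W as [|y W' IH]; simpl; intros Hnd Hx. destruct Hx.
  inversion Hnd; subst. destruct Hx as [->|Hx].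
  - rewrite nsum_zero. assert (leqb x x = true) by (apply leqb_spec; auto). rewrite H.
    destruct (Q x); simpl; lia.
    intros w Hw. destruct (Q w); auto. destruct (leqb x w) eqn:E; auto. apply leqb_spec in E. subst. contradiction.
  - rewrite IH; auto. destruct (Q y); [|lia]. destruct (leqb x y) eqn:E; simpl; auto.
    apply leqb_spec in E; subst; contradiction.
Qed.

Lemma lsum_ext g1 g2 W : (forall w, In w W -> g1 w = g2 w) -> lsum g1 W = lsum g2 W.
Proof. induction W; simpl; intros H; auto. rewrite H, IHW; auto. Qed.

Lemma lsum_add g1 g2 W : lsum (fun w => g1 w + g2 w) W = lsum g1 W + lsum g2 W.
Proof. induction W; simpl. lra. rewrite IHW; lra. Qed.

Lemma lsum_le g1 g2 W : (forall w, In w W -> g1 w <= g2 w) -> lsum g1 W <= lsum g2 W.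
Proof. induction W; simpl; intros H. lra. pose proof (H a (or_introl eq_refl)). pose proof (IHW (fun w Hw => H w (or_intror Hw))). lra. Qed.

Lemma lsum_zero g W : (forall w, In w W -> g w = 0) -> lsum g W = 0.
Proof. induction W; simpl; intros H; auto. rewrite H, IHW; auto. lra. Qed.

Lemma lsum_single g W x : NoDup W -> In x W ->
  lsum (fun w => if leqb w x then g w else 0) W = g x.
Proof.
  induction W as [|y W' IH]; simpl; intros Hnd Hx. destruct Hx.
  inversion Hnd; subst. destruct Hx as [->|Hx].
  - rewrite lsum_zero. assert (leqb x x = true) by (apply leqb_spec; auto). rewrite H. lra.
    intros w Hw. destruct (leqb w x) eqn:E; auto. apply leqb_spec in E. subst. contradiction.
  - rewrite IH; auto. destruct (leqb y x) eqn:E; simpl; [|lra].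
    apply leqb_spec in E; subst; contradiction.
Qed.

Lemma conv_zero : conv (fun _ _ => 0%nat) 0.
Proof. intros e He. exists 0%nat. intros n j _ _. simpl. unfold Rdiv. rewrite Rmult_0_l, Rminus_0_r, Rabs_R0. lra. Qed.

Lemma conv_nsum (f : list nat -> nat -> nat -> nat) (r : list nat -> R) W :
  (forall w, In w W -> conv (f w) (r w)) ->
  conv (fun j n => nsum (fun w => f w j n) W) (lsum r W).
Proof.
  induction W; simpl; intros H. apply conv_zero.
  apply (conv_add (f a) (fun j n => nsum (fun w => f w j n) W)); auto.
Qed.

Lemma conv_unique f r1 r2 : conv f r1 -> conv f r2 -> r1 = r2.
Proof.
  intros H1 H2. apply Rle_antisym; apply (conv_mono f f); auto.
Qed.

Section Cyl.
Variable q : nat.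
Variable u : word.
Hypothesis Hq : over_alphabet q u.
Variable rho : list nat -> R.
Hypothesis Hrho : forall w, UF (occurs_atb u w) (rho w).

Definition FQ (L : nat) (Q : list nat -> bool) : R :=
  lsum (fun w => if Q w then rho w else 0) (words q L).

Lemma cnt_decomp L (Q : list nat -> bool) j n :
  cnt (fun k => Q (pref u k L)) j n =
  nsum (fun w => if Q w then cnt (fun k => leqb (pref u k L) w) j n else 0%nat) (words q L).
Proof.
  induction n; simpl.
  - rewrite nsum_zero; auto. intros w _. destruct (Q w); auto.
  - rewrite IHn. symmetry.
    rewrite (nsum_ext _ (fun w => ((if Q w then cnt (fun k => leqb (pref u k L) w) j n else 0) +
                  (if Q w then ind (leqb (pref u (j + n) L) w) else 0))%nat)).
    rewrite nsum_add, nsum_indicator; auto. apply NoDup_words. apply pref_in_words; auto.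
    intros w. destruct (Q w); simpl; lia.
Qed.

Lemma cyl_freq L (Q : list nat -> bool) : UF (fun k => Q (pref u k L)) (FQ L Q).
Proof.
  unfold UF, FQ.
  assert (E : forall j n, cnt (fun k => Q (pref u k L)) j n =
     nsum (fun w => (fun w j n => if Q w then cnt (fun k => leqb (pref u k L) w) j n else 0%nat) w j n) (words q L))
     by (intros; apply cnt_decomp).
  intros e He.
  destruct (conv_nsum (fun w j n => if Q w then cnt (fun k => leqb (pref u k L) w) j n else 0%nat)
    (fun w => if Q w then rho w else 0) (words q L)) with (eps := e) as [N HN]; auto.
  - intros w Hw. destruct (Q w). 
    + apply in_words in Hw. destruct Hw as [Hl _]. 
      intros e' He'. destruct (Hrho w e' He') as [N HN]. exists N. intros n j H1 H2.
      specialize (HN n j H1 H2). rewrite <- Hl.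
      erewrite cnt_ext. exact HN. intros x. simpl. rewrite occb_pref. reflexivity.
    + apply conv_zero.
  - exists N. intros n j H1 H2. rewrite E. apply HN; auto.
Qed.

Lemma rho_nonneg w : 0 <= rho w.
Proof. apply (conv_nonneg _ _ (Hrho w)). Qed.

Lemma FQ_le L Q1 Q2 : (forall w, In w (words q L) -> Q1 w = true -> Q2 w = true) -> FQ L Q1 <= FQ L Q2.
Proof.
  intros H. apply lsum_le. intros w Hw. specialize (H w Hw). pose proof (rho_nonneg w).
  destruct (Q1 w), (Q2 w); try lra; try (specialize (H eq_refl); discriminate).
Qed.

Lemma FQ_ext L Q1 Q2 : (forall w, In w (words q L) -> Q1 w = Q2 w) -> FQ L Q1 = FQ L Q2.
Proof. intros H. apply lsum_ext. intros w Hw. rewrite H; auto. Qed.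

Lemma FQ_or L Q1 Q2 : (forall w, In w (words q L) -> Q1 w = true -> Q2 w = true -> False) ->
  FQ L (fun w => orb (Q1 w) (Q2 w)) = FQ L Q1 + FQ L Q2.
Proof.
  intros H. unfold FQ. rewrite <- lsum_add. apply lsum_ext. intros w Hw. specialize (H w Hw).
  destruct (Q1 w), (Q2 w); simpl; try lra; exfalso; auto.
Qed.

Lemma FQ_single L x : In x (words q L) -> FQ L (fun w => leqb w x) = rho x.
Proof. intros Hx. unfold FQ. apply lsum_single; auto. apply NoDup_words. Qed.

Lemma FQ_true L : FQ L (fun _ => true) = 1.
Proof.
  pose proof (cyl_freq L (fun _ => true)) as H. unfold UF in H.
  apply (conv_unique _ _ _ H). intros e He. exists 1%nat. intros n j _ Hn.
  assert (cnt (fun _ : nat => true) j n = n). { clear. induction n; simpl; auto. rewrite IHn. simpl. lia. }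
  rewrite H0. assert (0 < INR n) by (apply INR_pos; auto).
  replace (INR n / INR n - 1) with 0 by (field; lra). rewrite Rabs_R0; lra.
Qed.

End Cyl.

Fixpoint lexb (w1 w2 : list nat) : bool :=
  match w1, w2 with
  | a :: r1, b :: r2 => orb (Nat.ltb a b) (andb (Nat.eqb a b) (lexb r1 r2))
  | _, _ => false
  end.

Lemma lexb_irrefl w : lexb w w = false.
Proof. induction w; simpl; auto. rewrite Nat.ltb_irrefl, Nat.eqb_refl, IHw. reflexivity. Qed.

Lemma lexb_cons a b r1 r2 : lexb (a :: r1) (b :: r2) = true <-> (a < b)%nat \/ (a = b /\ lexb r1 r2 = true).
Proof.
  simpl. rewrite Bool.orb_true_iff, Bool.andb_true_iff, Nat.ltb_lt, Nat.eqb_eq. tauto.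
Qed.

Lemma lexb_trans w1 w2 w3 : lexb w1 w2 = true -> lexb w2 w3 = true -> lexb w1 w3 = true.
Proof.
  revert w2 w3. induction w1 as [|a r1 IH]; intros [|b r2] [|c r3]; simpl; try discriminate.
  rewrite !Bool.orb_true_iff, !Bool.andb_true_iff, !Nat.ltb_lt, !Nat.eqb_eq.
  intros H1 H2. destruct H1 as [H1|[H1 H1']]; destruct H2 as [H2|[H2 H2']]; subst.
  left; lia. left; lia. left; lia. right; split; auto. eapply IH; eauto.
Qed.

Lemma lexb_total w1 w2 : length w1 = length w2 -> w1 <> w2 -> lexb w1 w2 = true \/ lexb w2 w1 = true.
Proof.
  revert w2. induction w1 as [|a r1 IH]; intros [|b r2]; simpl; intros Hl Hne; try discriminate.
  congruence.
  rewrite !Bool.orb_true_iff, !Bool.andb_true_iff, !Nat.ltb_lt, !Nat.eqb_eq.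
  destruct (lt_eq_lt_dec a b) as [[H|H]|H]. left; left; auto.
  subst. assert (r1 <> r2) by congruence. destruct (IH r2 ltac:(lia) H) as [H'|H'].
  left; right; auto. right; right; auto.
  right; left; auto.
Qed.

Lemma lexb_asym w1 w2 : lexb w1 w2 = true -> lexb w2 w1 = true -> False.
Proof. intros H1 H2. pose proof (lexb_trans _ _ _ H1 H2). rewrite lexb_irrefl in H. discriminate. Qed.

Lemma pref_S u i L : pref u i (S L) = u i :: pref u (S i) L.
Proof.
  unfold pref. simpl. rewrite Nat.add_0_r. f_equal. rewrite <- seq_shift, map_map.
  apply map_ext. intros x. f_equal. lia.
Qed.

Lemma lexb_pref u i j L :
  lexb (pref u i L) (pref u j L) = true <->
  exists m, (m < L)%nat /\ (forall x, (x < m)%nat -> u (i + x)%nat = u (j + x)%nat) /\ (u (i + m) < u (j + m))%nat.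
Proof.
  revert i j. induction L; intros i j.
  - simpl. split. discriminate. intros [m [H _]]. lia.
  - rewrite !pref_S, lexb_cons, IHL. split.
    + intros [H|[H [m [Hm [A B]]]]].
      * exists 0%nat. split. lia. split. intros; lia. rewrite !Nat.add_0_r; auto.
      * exists (S m). split. lia. split.
        intros x Hx. destruct x. rewrite !Nat.add_0_r; auto. replace (i + S x)%nat with (S i + x)%nat by lia.
        replace (j + S x)%nat with (S j + x)%nat by lia. apply A; lia.
        replace (i + S m)%nat with (S i + m)%nat by lia. replace (j + S m)%nat with (S j + m)%nat by lia. auto.
    + intros [m [Hm [A B]]]. destruct m.
      * left. rewrite !Nat.add_0_r in B; auto.
      * right. split. specialize (A 0%nat ltac:(lia)). rewrite !Nat.add_0_r in A; auto.
        exists m. split. lia. split. intros x Hx. specialize (A (S x) ltac:(lia)).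
        replace (i + S x)%nat with (S i + x)%nat in A by lia. replace (j + S x)%nat with (S j + x)%nat in A by lia. auto.
        replace (i + S m)%nat with (S i + m)%nat in B by lia. replace (j + S m)%nat with (S j + m)%nat in B by lia. auto.
Qed.

Lemma pref_eq u i j L : pref u i L = pref u j L <-> forall x, (x < L)%nat -> u (i + x)%nat = u (j + x)%nat.
Proof.
  unfold pref. split.
  - intros H x Hx. pose proof (f_equal (fun l => nth x l 0%nat) H) as H'. simpl in H'.
    rewrite !nth_map_seq in H'; auto.
  - intros H. apply map_ext_in. intros x Hx. apply in_seq in Hx. apply H. lia.
Qed.

Lemma lexb_pref_mono u i j L L' : (L <= L')%nat ->
  lexb (pref u i L) (pref u j L) = true -> lexb (pref u i L') (pref u j L') = true.
Proof.
  intros HL. rewrite !lexb_pref. intros [m [Hm H]]. exists m. split; auto. lia.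
Qed.

Lemma lexlt_pref u i j : lexlt u i j -> exists L0, forall L, (L0 <= L)%nat -> lexb (pref u i L) (pref u j L) = true.
Proof.
  intros [m [A B]]. exists (S m). intros L HL. apply lexb_pref. exists m. split. lia. auto.
Qed.

Lemma cnt_le1_win (P : nat -> bool) j N :
  (forall a b, (a < N)%nat -> (b < N)%nat -> P (j + a)%nat = true -> P (j + b)%nat = true -> a = b) ->
  (cnt P j N <= 1)%nat.
Proof.
  induction N; intros H; simpl. lia.
  destruct (P (j+N)%nat) eqn:E; simpl.
  - assert (cnt P j N = 0%nat); [|lia].
    apply cnt_false. intros k Hk. destruct (P (j+k)%nat) eqn:E2; auto.
    specialize (H k N ltac:(lia) ltac:(lia) E2 E). lia.
  - rewrite Nat.add_0_r. apply IHN. intros a b Ha Hb. apply H; lia.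
Qed.

Lemma cnt_sep_bound (P : nat -> bool) D :
  (forall x y, P x = true -> P y = true -> (x < y)%nat -> (D < y - x)%nat) ->
  forall j N, (S D * cnt P j N <= N + S D)%nat.
Proof.
  intros H j N.
  assert (Hb : forall j', (cnt P j' (S D) <= 1)%nat).
  { intros j'. apply cnt_le1_win. intros a b Ha Hb Pa Pb.
    destruct (lt_eq_lt_dec a b) as [[Hl|Hl]|Hl]; auto.
    specialize (H _ _ Pa Pb ltac:(lia)). lia. specialize (H _ _ Pb Pa ltac:(lia)). lia. }
  assert (Hk : forall k, (cnt P j (k * S D) <= k)%nat).
  { induction k. simpl. lia. replace (S k * S D)%nat with (k * S D + S D)%nat by lia.
    rewrite cnt_split. specialize (Hb (j + k * S D)%nat). lia. }
  set (k := (N / S D + 1)%nat).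
  assert (HN : (N <= k * S D)%nat).
  { unfold k. pose proof (Nat.div_mod N (S D) ltac:(lia)). pose proof (Nat.mod_upper_bound N (S D) ltac:(lia)).
    nia. }
  assert (cnt P j N <= cnt P j (k * S D))%nat.
  { replace (k * S D)%nat with (N + (k * S D - N))%nat by lia. rewrite cnt_split. lia. }
  specialize (Hk k). pose proof (Nat.Div0.mul_div_le N (S D)). unfold k in *. nia.
Qed.

Section MaxFreq.
Variable q : nat.
Variable u : word.
Hypothesis Hq : over_alphabet q u.
Hypothesis Hap : aperiodic u.
Variable rho : list nat -> R.
Hypothesis Hrho : forall w, UF (occurs_atb u w) (rho w).
Hypothesis Hpos : forall w, is_factor u w -> 0 < rho w.

Lemma pref_factor k L : is_factor u (pref u k L).
Proof. exists k. unfold occurs_at. rewrite length_pref. reflexivity. Qed.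

Lemma witness_window d : (1 <= d)%nat ->
  exists R0, forall i, exists p, (i <= p)%nat /\ (p + d < i + R0)%nat /\ u p <> u (p + d)%nat.
Proof.
  intros Hd.
  assert (Hk : exists k0, u k0 <> u (k0 + d)%nat).
  { apply NNPP. intros H. apply Hap. exists d, 0%nat. split. lia. intros n _.
    apply NNPP. intros H'. apply H. exists n. auto. }
  destruct Hk as [k0 Hk0].
  set (y := pref u k0 (S d)).
  assert (Hy : 0 < rho y) by (apply Hpos, pref_factor).
  destruct (Hrho y (rho y / 2)) as [N HN]. lra.
  destruct (INR_unbounded (INR (S d) / (rho y / 2))) as [n0 Hn0].
  set (n := Nat.max N (Nat.max 1 n0)).
  exists n. intros i.
  specialize (HN n i ltac:(lia) ltac:(lia)).
  apply Rabs_lt_between in HN. destruct HN as [HN _].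
  assert (Hnp : 0 < INR n) by (apply INR_pos; lia).
  assert (INR n0 <= INR n) by (apply le_INR; lia).
  assert (Hc : INR (S d) < INR (cnt (occurs_atb u y) i n)).
  { assert (INR (S d) / (rho y / 2) * (rho y / 2) = INR (S d)) by (field; lra).
    assert (INR (S d) / (rho y / 2) * (rho y / 2) < INR n * (rho y / 2)) by (apply Rmult_lt_compat_r; lra).
    assert (rho y / 2 * INR n < INR (cnt (occurs_atb u y) i n)).
    { apply Rmult_lt_reg_r with (/ INR n). apply Rinv_0_lt_compat; lra.
      rewrite Rmult_assoc, Rinv_r by lra. unfold Rdiv in HN. lra. }
    lra. }
  apply INR_lt in Hc.
  pose proof (cnt_le (occurs_atb u y) i n).
  assert (E : cnt (occurs_atb u y) i n = cnt (occurs_atb u y) i ((n - S d) + S d)) by (f_equal; lia).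
  rewrite E, cnt_split in Hc.
  pose proof (cnt_le (occurs_atb u y) (i + (n - S d)) (S d)).
  destruct (cnt_pos_exists (occurs_atb u y) i (n - S d) ltac:(lia)) as [x [Hx Hocc]].
  apply occurs_atb_spec in Hocc. rewrite occurs_at_nth in Hocc. unfold y in Hocc. rewrite length_pref in Hocc.
  exists (i + x)%nat. split. lia. split. lia.
  pose proof (Hocc 0%nat ltac:(lia)) as G0. pose proof (Hocc d ltac:(lia)) as G1.
  unfold pref in G0, G1. rewrite nth_map_seq in G0, G1 by lia.
  rewrite !Nat.add_0_r in G0. rewrite G0, G1. auto.
Qed.

Lemma witness_all D : exists R0, forall d, (1 <= d <= D)%nat -> forall i,
  exists p, (i <= p)%nat /\ (p + d < i + R0)%nat /\ u p <> u (p + d)%nat.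
Proof.
  induction D.
  - exists 0%nat. intros; lia.
  - destruct IHD as [R1 H1]. destruct (witness_window (S D) ltac:(lia)) as [R2 H2].
    exists (Nat.max R1 R2). intros d Hd i. destruct (Nat.eq_dec d (S D)).
    + subst. destruct (H2 i) as [p [A [B C]]]. exists p. split; auto. split; auto. lia.
    + destruct (H1 d ltac:(lia) i) as [p [A [B C]]]. exists p. split; auto. split; auto. lia.
Qed.

Lemma rho_small eps : eps > 0 -> exists L, forall w, length w = L -> rho w < eps.
Proof.
  intros He.
  destruct (INR_unbounded (1 / eps)) as [D HD].
  destruct (witness_all D) as [R0 HR].
  exists R0. intros w Hw.
  assert (Hsep : forall x y, occurs_atb u w x = true -> occurs_atb u w y = true -> (x < y)%nat -> (D < y - x)%nat).
  { intros x y Px Py Hxy. destruct (le_lt_dec (y - x) D) as [Hle|]; auto. exfalso.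
    apply occurs_atb_spec in Px. rewrite occurs_at_nth in Px. apply occurs_atb_spec in Py. rewrite occurs_at_nth in Py.
    destruct (HR (y - x)%nat ltac:(lia) x) as [p [A [B C]]].
    apply C. specialize (Px (p - x)%nat ltac:(lia)). specialize (Py (p - x)%nat ltac:(lia)).
    replace (x + (p - x))%nat with p in Px by lia. replace (y + (p - x))%nat with (p + (y - x))%nat in Py by lia.
    congruence. }
  pose proof (cnt_sep_bound _ D Hsep) as Hb.
  assert (HSD : 0 < INR (S D)) by (apply INR_pos; lia).
  assert (rho w <= 1 / INR (S D)).
  { apply (conv_le_lin _ _ _ 1 (Hrho w)). intros n _. specialize (Hb 0%nat n).
    apply le_INR in Hb. rewrite mult_INR, plus_INR in Hb.
    apply Rmult_le_reg_l with (INR (S D)); auto.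
    replace (INR (S D) * (1 / INR (S D) * INR n + INR 1)) with (INR n + INR (S D)) by (change (INR 1) with 1; field; lra).
    lra. }
  assert (1 / INR (S D) < eps).
  { rewrite S_INR. assert (1 / eps * eps = 1) by (field; lra).
    apply Rmult_lt_reg_r with (INR D + 1). pose proof (pos_INR D); lra.
    unfold Rdiv. rewrite Rmult_assoc, Rinv_l by (pose proof (pos_INR D); lra).
    assert (1 / eps * eps < INR D * eps) by (apply Rmult_lt_compat_r; lra). nra. }
  lra.
Qed.

End MaxFreq.

Lemma lim_le U l c N0 : Un_cv U l -> (forall n, (N0 <= n)%nat -> U n <= c) -> l <= c.
Proof.
  intros H Hb. destruct (Rle_or_lt l c) as [|Hlt]; auto. exfalso.
  destruct (H (l - c)) as [N HN]. lra.
  specialize (HN (Nat.max N N0) ltac:(lia)). specialize (Hb (Nat.max N N0) ltac:(lia)).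
  unfold Rdist in HN. apply Rabs_def2 in HN. lra.
Qed.

Lemma cnt_or_disj (P Q : nat -> bool) j N :
  (forall n, P n = true -> Q n = true -> False) ->
  cnt (fun n => orb (P n) (Q n)) j N = (cnt P j N + cnt Q j N)%nat.
Proof.
  intros H. induction N; simpl; auto. rewrite IHN.
  specialize (H (j+N)%nat). destruct (P (j+N)%nat), (Q (j+N)%nat); simpl; try lia; exfalso; auto.
Qed.

Lemma list_max (Z : list nat -> bool) (l : list (list nat)) :
  (forall w1 w2, In w1 l -> In w2 l -> w1 <> w2 -> lexb w1 w2 = true \/ lexb w2 w1 = true) ->
  (exists w, In w l /\ Z w = true) ->
  exists m, In m l /\ Z m = true /\ forall w, In w l -> Z w = true -> w = m \/ lexb w m = true.
Proof.
  induction l as [|x l' IH]; intros Htot [w [Hw HZ]]. destruct Hw.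
  destruct (classic (exists w, In w l' /\ Z w = true)) as [Hex|Hno].
  - destruct (IH (fun a b Ha Hb => Htot a b (or_intror Ha) (or_intror Hb)) Hex) as [m [Hm1 [Hm2 Hm3]]].
    destruct (Z x) eqn:Zx.
    + destruct (list_eq_dec Nat.eq_dec x m) as [->|Hne].
      * exists m. split. right; auto. split; auto. intros w' [<-|Hw'] Hz; auto.
      * destruct (Htot x m (or_introl eq_refl) (or_intror Hm1) Hne) as [Hl|Hl].
        -- exists m. split. right; auto. split; auto. intros w' [<-|Hw'] Hz; auto.
        -- exists x. split. left; auto. split; auto. intros w' [<-|Hw'] Hz; auto.
           destruct (Hm3 w' Hw' Hz) as [->|H]. right; auto. right; eapply lexb_trans; eauto.
    + exists m. split. right; auto. split; auto. intros w' [<-|Hw'] Hz; auto. congruence.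
  - assert (Zx : Z x = true). { destruct Hw as [<-|Hw]; auto. exfalso; apply Hno; eauto. }
    exists x. split. left; auto. split; auto. intros w' [<-|Hw'] Hz; auto. exfalso; apply Hno; eauto.
Qed.

Lemma list_min (Z : list nat -> bool) (l : list (list nat)) :
  (forall w1 w2, In w1 l -> In w2 l -> w1 <> w2 -> lexb w1 w2 = true \/ lexb w2 w1 = true) ->
  (exists w, In w l /\ Z w = true) ->
  exists m, In m l /\ Z m = true /\ forall w, In w l -> Z w = true -> w = m \/ lexb m w = true.
Proof.
  induction l as [|x l' IH]; intros Htot [w [Hw HZ]]. destruct Hw.
  destruct (classic (exists w, In w l' /\ Z w = true)) as [Hex|Hno].
  - destruct (IH (fun a b Ha Hb => Htot a b (or_intror Ha) (or_intror Hb)) Hex) as [m [Hm1 [Hm2 Hm3]]].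
    destruct (Z x) eqn:Zx.
    + destruct (list_eq_dec Nat.eq_dec x m) as [->|Hne].
      * exists m. split. right; auto. split; auto. intros w' [<-|Hw'] Hz; auto.
      * destruct (Htot x m (or_introl eq_refl) (or_intror Hm1) Hne) as [Hl|Hl].
        -- exists x. split. left; auto. split; auto. intros w' [<-|Hw'] Hz; auto.
           destruct (Hm3 w' Hw' Hz) as [->|H]. right; auto. right; eapply lexb_trans; eauto.
        -- exists m. split. right; auto. split; auto. intros w' [<-|Hw'] Hz; auto.
    + exists m. split. right; auto. split; auto. intros w' [<-|Hw'] Hz; auto. congruence.
  - assert (Zx : Z x = true). { destruct Hw as [<-|Hw]; auto. exfalso; apply Hno; eauto. }
    exists x. split. left; auto. split; auto. intros w' [<-|Hw'] Hz; auto. exfalso; apply Hno; eauto.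
Qed.

Lemma words_total q L : forall w1 w2, In w1 (words q L) -> In w2 (words q L) -> w1 <> w2 ->
  lexb w1 w2 = true \/ lexb w2 w1 = true.
Proof.
  intros w1 w2 H1 H2 Hne. apply in_words in H1. apply in_words in H2. apply lexb_total; auto. lia.
Qed.

Section Back.
Variable q : nat.
Variable u : word.
Hypothesis Hq : over_alphabet q u.
Hypothesis Hrec : recurrent u.
Hypothesis Hap : aperiodic u.
Variable rho : list nat -> R.
Hypothesis Hrho : forall w, UF (occurs_atb u w) (rho w).
Hypothesis Hpos : forall w, is_factor u w -> 0 < rho w.

Definition FW L w := FQ q rho L (fun w' => lexb w' w).
Definition GW L w := FW L w + rho w.
Definition Fk L k := FW L (pref u k L).
Definition Gk L k := GW L (pref u k L).

Lemma FW_nonneg L w : 0 <= FW L w.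
Proof.
  unfold FW, FQ. generalize (words q L). induction l; simpl. lra.
  destruct (lexb a w). pose proof (rho_nonneg u rho Hrho a). lra. lra.
Qed.

Lemma GW_mono L w1 w2 : In w1 (words q L) -> lexb w1 w2 = true -> GW L w1 <= FW L w2.
Proof.
  intros Hin Hl. unfold GW, FW. rewrite <- (FQ_single q rho L w1 Hin).
  rewrite <- FQ_or.
  - apply (FQ_le q u rho Hrho). intros w _ H. apply Bool.orb_true_iff in H. destruct H as [H|H].
    eapply lexb_trans; eauto. apply leqb_spec in H. subst; auto.
  - intros w _ H1 H2. apply leqb_spec in H2. subst. rewrite lexb_irrefl in H1. discriminate.
Qed.

Lemma GW_le1 L w : In w (words q L) -> GW L w <= 1.
Proof.
  intros Hin. unfold GW, FW. rewrite <- (FQ_single q rho L w Hin), <- FQ_or.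
  rewrite <- (FQ_true q u Hq rho Hrho L). apply (FQ_le q u rho Hrho). auto.
  intros w' _ H1 H2. apply leqb_spec in H2. subst. rewrite lexb_irrefl in H1. discriminate.
Qed.

Lemma Fk_UF L k : UF (fun k' => lexb (pref u k' L) (pref u k L)) (Fk L k).
Proof. apply (cyl_freq q u Hq rho Hrho L (fun w' => lexb w' (pref u k L))). Qed.

Lemma Gk_UF L k : UF (fun k' => orb (lexb (pref u k' L) (pref u k L)) (leqb (pref u k' L) (pref u k L))) (Gk L k).
Proof.
  unfold UF, Gk, GW. fold (Fk L k).
  apply (conv_add (fun j n => cnt (fun k' => lexb (pref u k' L) (pref u k L)) j n)
                  (fun j n => cnt (occurs_atb u (pref u k L)) j n)).
  apply Fk_UF. apply Hrho.
  intros j n. rewrite cnt_or_disj. f_equal. apply cnt_ext. intros x. rewrite occb_pref, length_pref. auto.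
  intros x H1 H2. apply leqb_spec in H2. rewrite H2, lexb_irrefl in H1. discriminate.
Qed.

Lemma Fk_grow L k : Fk L k <= Fk (S L) k.
Proof.
  apply (conv_mono _ _ _ _ (Fk_UF L k) (Fk_UF (S L) k)). intros j n. apply cnt_mono.
  intros x. apply lexb_pref_mono. lia.
Qed.

Lemma Gk_decr L k : Gk (S L) k <= Gk L k.
Proof.
  apply (conv_mono _ _ _ _ (Gk_UF (S L) k) (Gk_UF L k)). intros j n. apply cnt_mono.
  intros x H. apply Bool.orb_true_iff in H. apply Bool.orb_true_iff. destruct H as [H|H].
  - apply lexb_pref in H. destruct H as [m [Hm [A B]]].
    destruct (Nat.eq_dec m L).
    + subst. right. apply leqb_spec, pref_eq. auto.
    + left. apply lexb_pref. exists m. split. lia. auto.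
  - right. apply leqb_spec in H. apply leqb_spec. apply pref_eq. intros y Hy.
    rewrite pref_eq in H. apply H. lia.
Qed.

Lemma Fk_le_Gk L k : Fk L k <= Gk L k.
Proof. unfold Fk, Gk, GW. pose proof (rho_nonneg u rho Hrho (pref u k L)). lra. Qed.

Lemma Gk_le1 L k : Gk L k <= 1.
Proof. apply GW_le1. apply pref_in_words; auto. Qed.

Lemma Fk_nonneg L k : 0 <= Fk L k.
Proof. apply FW_nonneg. Qed.

Lemma Fk_growing k : Un_growing (fun L => Fk L k).
Proof. intros L. apply Fk_grow. Qed.

Lemma Fk_ub k : has_ub (fun L => Fk L k).
Proof. exists 1. intros x [L ->]. pose proof (Fk_le_Gk L k). pose proof (Gk_le1 L k). lra. Qed.

Definition aa (k : nat) : R := proj1_sig (growing_cv _ (Fk_growing k) (Fk_ub k)).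

Lemma aa_ge L k : Fk L k <= aa k.
Proof.
  unfold aa. destruct (growing_cv _ (Fk_growing k) (Fk_ub k)) as [l Hl]. simpl.
  apply (growing_ineq (fun L => Fk L k)); auto. apply Fk_growing.
Qed.

Lemma Gk_decr_le L L' k : (L <= L')%nat -> Gk L' k <= Gk L k.
Proof.
  induction 1. lra. pose proof (Gk_decr m k). lra.
Qed.

Lemma aa_le L k : aa k <= Gk L k.
Proof.
  unfold aa. destruct (growing_cv _ (Fk_growing k) (Fk_ub k)) as [l Hl]. simpl.
  apply (lim_le _ _ _ L Hl). intros n Hn. pose proof (Fk_le_Gk n k). pose proof (Gk_decr_le L n k Hn). lra.
Qed.

Lemma between i j : lexlt u i j -> exists k, lexlt u i k /\ lexlt u k j.
Proof.
  intros Hij. pose proof Hij as [m [Hagr Hlt]].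
  assert (Hne : i <> j) by (intros ->; apply (lex_irrefl u j); auto).
  destruct (lt_dec i j) as [Hlij|Hlij].
  - set (d := (j - i)%nat). set (W := pref u i (d + m + 1)).
    destruct (Hrec W (pref_factor u i _) (S i)) as [r [Hr Hocc]].
    rewrite occurs_at_nth in Hocc. unfold W in Hocc. rewrite length_pref in Hocc.
    assert (HocW : forall x, (x < d + m + 1)%nat -> u (r + x)%nat = u (i + x)%nat).
    { intros x Hx. rewrite Hocc by auto. unfold pref. rewrite nth_map_seq; auto. }
    destruct (lex_total u Hap i r ltac:(lia)) as [Hir|Hri].
    + exists r. split; auto. exists m. split.
      intros x Hx. rewrite HocW by lia. auto. rewrite HocW by lia. auto.
    + destruct Hri as [e [Ae Be]].
      assert (He : (d + m + 1 <= e)%nat).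
      { destruct (le_lt_dec (d + m + 1) e); auto. rewrite HocW in Be by lia. lia. }
      exists (r + d)%nat. split.
      * exists m. split. intros x Hx. rewrite Hagr by auto. replace (r + d + x)%nat with (r + (d + x))%nat by lia.
        rewrite HocW by lia. f_equal. unfold d. lia.
        replace (r + d + m)%nat with (r + (d + m))%nat by lia. rewrite HocW by lia.
        replace (i + (d + m))%nat with (j + m)%nat by (unfold d; lia). auto.
      * exists (e - d)%nat. split.
        -- intros x Hx. replace (r + d + x)%nat with (r + (d + x))%nat by lia. rewrite Ae by lia.
           f_equal. unfold d; lia.
        -- replace (r + d + (e - d))%nat with (r + e)%nat by lia.
           replace (j + (e - d))%nat with (i + e)%nat by (unfold d; lia). auto.
  - set (d := (i - j)%nat). set (W := pref u j (d + m + 1)).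
    destruct (Hrec W (pref_factor u j _) (S j)) as [r [Hr Hocc]].
    rewrite occurs_at_nth in Hocc. unfold W in Hocc. rewrite length_pref in Hocc.
    assert (HocW : forall x, (x < d + m + 1)%nat -> u (r + x)%nat = u (j + x)%nat).
    { intros x Hx. rewrite Hocc by auto. unfold pref. rewrite nth_map_seq; auto. }
    destruct (lex_total u Hap r j ltac:(lia)) as [Hrj|Hjr].
    + exists r. split; auto. exists m. split.
      intros x Hx. rewrite HocW by lia. auto. rewrite HocW by lia. auto.
    + destruct Hjr as [e [Ae Be]].
      assert (He : (d + m + 1 <= e)%nat).
      { destruct (le_lt_dec (d + m + 1) e); auto. rewrite HocW in Be by lia. lia. }
      exists (r + d)%nat. split.
      * exists (e - d)%nat. split.
        -- intros x Hx. replace (r + d + x)%nat with (r + (d + x))%nat by lia. rewrite <- Ae by lia.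
           f_equal. unfold d; lia.
        -- replace (r + d + (e - d))%nat with (r + e)%nat by lia.
           replace (i + (e - d))%nat with (j + e)%nat by (unfold d; lia). auto.
      * exists m. split. intros x Hx. rewrite <- Hagr by auto. replace (r + d + x)%nat with (r + (d + x))%nat by lia.
        rewrite HocW by lia. f_equal. unfold d. lia.
        replace (r + d + m)%nat with (r + (d + m))%nat by lia. rewrite HocW by lia.
        replace (j + (d + m))%nat with (i + m)%nat by (unfold d; lia). auto.
Qed.

Lemma aa_lt i j : lexlt u i j -> aa i < aa j.
Proof.
  intros H. destruct (between i j H) as [k [H1 H2]].
  destruct (lexlt_pref u i k H1) as [L1 HL1]. destruct (lexlt_pref u k j H2) as [L2 HL2].
  set (L := Nat.max L1 L2).
  specialize (HL1 L ltac:(lia)). specialize (HL2 L ltac:(lia)).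
  pose proof (aa_le L i). pose proof (aa_ge L j).
  pose proof (GW_mono L _ _ (pref_in_words q u k L Hq) HL2).
  pose proof (GW_mono L _ _ (pref_in_words q u i L Hq) HL1).
  pose proof (Hpos _ (pref_factor u k L)).
  unfold Gk, Fk, GW in *. lra.
Qed.

End Back.

Lemma bltR_spec x t : bltR x t = true <-> x < t.
Proof. unfold bltR. destruct (Rlt_dec x t); split; intros; auto; try discriminate; lra. Qed.

Section Canon.
Variable q : nat.
Variable u : word.
Hypothesis Hq : over_alphabet q u.
Hypothesis Hrec : recurrent u.
Hypothesis Hap : aperiodic u.
Variable rho : list nat -> R.
Hypothesis Hrho : forall w, UF (occurs_atb u w) (rho w).
Hypothesis Hpos : forall w, is_factor u w -> 0 < rho w.

Let a := aa q u Hq rho Hrho.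

Lemma FQ_false L : FQ q rho L (fun _ => false) = 0.
Proof. unfold FQ. apply lsum_zero. auto. Qed.

Lemma aa_canon t : 0 <= t <= 1 -> forall eps, eps > 0 -> exists N : nat, forall n j : nat,
  (N <= n)%nat -> (0 < n)%nat -> Rabs (INR (count_below a j t n) / INR n - t) < eps.
Proof.
  intros Ht eps He.
  destruct (rho_small u Hap rho Hrho Hpos (eps/4)) as [L HL]. lra.
  set (W := words q L).
  set (Zh := fun w => bltR (FW q rho L w) t).
  set (Zl := fun w => bltR (GW q rho L w) t).
  assert (Hwl : forall w, In w W -> rho w < eps / 4).
  { intros w Hw. apply HL. apply in_words in Hw. tauto. }
  assert (Hfh : FQ q rho L Zh < t + eps / 4).
  { destruct (classic (exists w, In w W /\ Zh w = true)) as [Hex|Hno].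
    - destruct (list_max Zh W (words_total q L) Hex) as [m [Hm1 [Hm2 Hm3]]].
      assert (E : FQ q rho L Zh = FQ q rho L (fun w => orb (lexb w m) (leqb w m))).
      { apply FQ_ext. intros w Hw. destruct (Zh w) eqn:Ez.
        - destruct (Hm3 w Hw Ez) as [->|H]. rewrite lexb_irrefl. simpl. symmetry; apply leqb_spec; auto.
          rewrite H; auto.
        - symmetry. apply Bool.not_true_iff_false. intros H. apply Bool.orb_true_iff in H.
          destruct H as [H|H].
          + pose proof (GW_mono q u rho Hrho L w m Hw H).
            unfold Zh in Ez, Hm2. apply bltR_spec in Hm2.
            assert (FW q rho L w < t).
            { unfold GW in H0. pose proof (rho_nonneg u rho Hrho w). lra. }
            apply bltR_spec in H1. congruence.
          + apply leqb_spec in H. subst. congruence. }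
      rewrite E, FQ_or, FQ_single; auto.
      unfold Zh in Hm2. apply bltR_spec in Hm2. fold (FW q rho L m). pose proof (Hwl m Hm1). lra.
      intros w _ H1 H2. apply leqb_spec in H2. subst. rewrite lexb_irrefl in H1. discriminate.
    - rewrite (FQ_ext q rho L Zh (fun _ => false)). rewrite FQ_false. lra.
      intros w Hw. destruct (Zh w) eqn:E; auto. exfalso; apply Hno; eauto. }
  assert (Hfl : t - eps / 4 < FQ q rho L Zl).
  { destruct (classic (exists w, In w W /\ negb (Zl w) = true)) as [Hex|Hno].
    - destruct (list_min (fun w => negb (Zl w)) W (words_total q L) Hex) as [m [Hm1 [Hm2 Hm3]]].
      assert (Zm : Zl m = false) by (destruct (Zl m); auto).
      assert (GWm : t <= GW q rho L m).
      { unfold Zl in Zm. destruct (Rlt_dec (GW q rho L m) t) as [Hl|Hl]. apply bltR_spec in Hl. congruence. lra. }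
      assert (E : FQ q rho L Zl = FQ q rho L (fun w => lexb w m)).
      { apply FQ_ext. intros w Hw. destruct (Zl w) eqn:Ez.
        - symmetry. destruct (list_eq_dec Nat.eq_dec w m) as [->|Hne]. congruence.
          destruct (words_total q L w m Hw Hm1 Hne) as [H|H]; auto. exfalso.
          pose proof (GW_mono q u rho Hrho L m w Hm1 H). unfold Zl in Ez. apply bltR_spec in Ez.
          unfold GW in *. pose proof (rho_nonneg u rho Hrho w). lra.
        - symmetry. apply Bool.not_true_iff_false. intros H.
          destruct (Hm3 w Hw ltac:(rewrite Ez; auto)) as [->|H'].
          rewrite lexb_irrefl in H; discriminate. apply (lexb_asym _ _ H H'). }
      rewrite E. fold (FW q rho L m). unfold GW in GWm. pose proof (Hwl m Hm1). lra.
    - rewrite (FQ_ext q rho L Zl (fun _ => true)). rewrite (FQ_true q u Hq rho Hrho). lra.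
      intros w Hw. destruct (Zl w) eqn:E; auto. exfalso; apply Hno. exists w. rewrite E; auto. }
  pose proof (cyl_freq q u Hq rho Hrho L Zh) as Uh.
  pose proof (cyl_freq q u Hq rho Hrho L Zl) as Ul.
  destruct (Uh (eps/4)) as [N1 HN1]. lra.
  destruct (Ul (eps/4)) as [N2 HN2]. lra.
  exists (Nat.max N1 N2). intros n j Hn Hn0.
  specialize (HN1 n j ltac:(lia) Hn0). specialize (HN2 n j ltac:(lia) Hn0).
  apply Rabs_lt_between in HN1. apply Rabs_lt_between in HN2.
  rewrite count_below_cnt.
  assert (C1 : (cnt (fun k => Zl (pref u k L)) j n <= cnt (fun x => if Rlt_dec (a x) t then true else false) j n)%nat).
  { apply cnt_mono. intros x H. unfold Zl in H. apply bltR_spec in H.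
    pose proof (aa_le q u Hq rho Hrho L x). unfold Gk in H0. fold a in H0.
    destruct (Rlt_dec (a x) t); auto. lra. }
  assert (C2 : (cnt (fun x => if Rlt_dec (a x) t then true else false) j n <= cnt (fun k => Zh (pref u k L)) j n)%nat).
  { apply cnt_mono. intros x H. destruct (Rlt_dec (a x) t) as [Hl|]; [|discriminate].
    unfold Zh. apply bltR_spec. pose proof (aa_ge q u Hq rho Hrho L x). unfold Fk in H0. fold a in H0. lra. }
  apply le_INR in C1. apply le_INR in C2.
  assert (Hnp : 0 < INR n) by (apply INR_pos; auto).
  assert (D1 : INR (cnt (fun k => Zl (pref u k L)) j n) / INR n <= INR (cnt (fun x => if Rlt_dec (a x) t then true else false) j n) / INR n).
  { unfold Rdiv. apply Rmult_le_compat_r; auto. left; apply Rinv_0_lt_compat; auto. }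
  assert (D2 : INR (cnt (fun x => if Rlt_dec (a x) t then true else false) j n) / INR n <= INR (cnt (fun k => Zh (pref u k L)) j n) / INR n).
  { unfold Rdiv. apply Rmult_le_compat_r; auto. left; apply Rinv_0_lt_compat; auto. }
  apply Rabs_def1; lra.
Qed.

End Canon.

Lemma backward q u : over_alphabet q u -> recurrent u -> aperiodic u ->
  (forall w : list nat, is_factor u w -> exists rho : R, uniform_frequency u w rho /\ rho <> 0) ->
  valid_perm_ergodic q u.
Proof.
  intros Hq Hrec Hap Hfreq.
  assert (Hall : forall w, exists r, UF (occurs_atb u w) r /\ (is_factor u w -> 0 < r)).
  { intros w. destruct (classic (is_factor u w)) as [Hf|Hnf].
    - destruct (Hfreq w Hf) as [r [Hr Hr0]]. exists r. apply uf_UF in Hr. split; auto.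
      intros _. pose proof (conv_nonneg _ _ Hr). lra.
    - exists 0. split; [|tauto]. unfold UF.
      apply (conv_bdiff (fun _ _ => 0%nat) _ 0). 2: apply conv_zero.
      intros j n. rewrite cnt_false. lia. intros k _. destruct (occurs_atb u w (j+k)%nat) eqn:E; auto.
      exfalso. apply Hnf. apply occurs_atb_spec in E. exists (j+k)%nat; auto. }
  set (rho := fun w => proj1_sig (constructive_indefinite_description _ (Hall w))).
  assert (Hrho : forall w, UF (occurs_atb u w) (rho w)).
  { intros w. unfold rho. destruct (constructive_indefinite_description _ (Hall w)) as [r [H1 H2]]. auto. }
  assert (Hpos : forall w, is_factor u w -> 0 < rho w).
  { intros w. unfold rho. destruct (constructive_indefinite_description _ (Hall w)) as [r [H1 H2]]. auto. }
  set (v := fun n => proj1_sig (constructive_indefinite_description _ (shift_value_exists q u Hq Hap n))).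
  assert (Hv : forall n, shift_value q u n (v n)).
  { intros n. unfold v. destruct (constructive_indefinite_description _ _) as [x Hx]. auto. }
  set (a := aa q u Hq rho Hrho).
  assert (Hlt : forall i j, lexlt u i j -> a i < a j).
  { intros i j H. apply (aa_lt q u Hq Hrec Hap rho Hrho Hpos); auto. }
  exists a. split.
  - exists v. split; auto. intros i j. split.
    + intros H. destruct (Nat.eq_dec i j). subst; lra.
      destruct (lex_total u Hap i j n) as [H2|H2].
      apply (shift_value_lt q u Hq Hap i j); auto.
      pose proof (Hlt _ _ H2). lra.
    + intros H. destruct (Nat.eq_dec i j). subst; lra.
      destruct (lex_total u Hap i j n) as [H2|H2]. auto.
      pose proof (shift_value_lt q u Hq Hap j i _ _ (Hv j) (Hv i) H2). lra.
  - split; [|split].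
    + intros i j Hij. destruct (lex_total u Hap i j Hij) as [H2|H2]; pose proof (Hlt _ _ H2); lra.
    + intros i. split.
      * pose proof (aa_ge q u Hq rho Hrho 0 i). pose proof (Fk_nonneg q u rho Hrho 0 i). unfold a. lra.
      * pose proof (aa_le q u Hq rho Hrho 0 i). pose proof (Gk_le1 q u Hq rho Hrho 0 i). unfold a. lra.
    + intros t Ht eps He. apply (aa_canon q u Hq Hap rho Hrho Hpos t Ht eps He).
Qed.

Theorem mainTheorem3 (q : nat) (u : word) :
  over_alphabet q u -> recurrent u -> aperiodic u ->
  (valid_perm_ergodic q u <->
   forall w : list nat, is_factor u w ->
     exists rho : R, uniform_frequency u w rho /\ rho <> 0).
Proof.
  intros Hq Hrec Hap. split.
  - apply forward; auto.
  - apply backward; auto.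
Qed.
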